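(* Let $d\ge 1$ and $n\ge 2$ be integers, $\kappa_d$ the volume of the $d$-dimensional unit ball, $V>0$, $-d/2<\tau_1<\dots<\tau_n$ reals, $a_i=\tau_i+d$ for $i\in[n]$, $b=\sum_{k=1}^n\prod_{l\in[n]\setminus\{k\}}a_l^2$ and $P=\prod_{k=1}^n a_k^2$. Let $\Sigma_n$ have entries $(\Sigma_n)_{ij}=\frac{Vd^2\kappa_d^2}{a_ia_j}$, let $\lambda_1=0$, $\lambda_2=Vd^2\kappa_d^2\sum_{i=1}^n a_i^{-2}$, and let $D=\operatorname{diag}(\lambda_1,\dots,\lambda_1,\lambda_2)\in\mathbb{R}^{n\times n}$. Let $S\in\mathbb{R}^{n\times n}$ have columns $v_1,\dots,v_n$, where $v_k=\frac{a_1}{a_{k+1}}e_1-e_{k+1}$ for $k=1,\dots,n-1$ ($e_i$ the standard basis vectors) and $v_n=(a_n/a_1,\dots,a_n/a_{n-1},1)^t$. Then $S$ is invertible, $\Sigma_n$ is similar to $D$ with $D=S^{-1}\Sigma_nS$, and $S^{-1}=(\tilde s_{ij})$ has entries $$\tilde s_{ij}=\begin{cases}\dfrac{P}{a_ja_nb} & \text{if } i=n,\\[2mm] -\dfrac{\sum_{k\in[n]\setminus\{i+1\}}a_{i+1}^2\prod_{l\in[n]\setminus\{k,i+1\}}a_l^2}{b} & \text{if } i<n,\ j=i+1,\\[2mm] \dfrac{P}{a_{i+1}a_jb} & \text{otherwise.}\end{cases}$$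
   Context: $\Sigma_n$ is the asymptotic covariance matrix of normalized length power functionals of a random geometric graph in the supercritical regime; $V$ is the volume of the window $W$. $[n]=\{1,\dots,n\}$. *)

(* Defs.v *)
From HB Require Import structures.
From mathcomp Require Import all_boot all_order all_algebra.
From mathcomp Require Import all_classical all_reals.
From mathcomp Require Import trigo.
Set Implicit Arguments. Unset Strict Implicit. Unset Printing Implicit Defensive.
Import Order.TTheory GRing.Theory Num.Theory.
Local Open Scope ring_scope.

(* kappa d = volume of the d-dimensional Euclidean unit ball:
   kappa 0 = 1, kappa 1 = 2, kappa (d+2) = 2 pi / (d+2) * kappa d. *)
Fixpoint kappa {R : realType} (d : nat) : R :=
  match d with
  | 0%N => 1
  | 1%N => 2
  | (k.+2)%N => (2 * pi / (k.+2)%:R) * kappa k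
  end.

(* All indices below are 1-based natural numbers, as in the paper;
   the entry (i,j) of an n x n matrix (i,j : 'I_n, 0-based) is the paper's
   entry (i+1, j+1). *)
Section Defs.
Variables (R : realType) (n : nat) (a : nat -> R).

Definition bcoef : R :=
  \sum_(1 <= k < n.+1) \prod_(1 <= l < n.+1 | l != k) a l ^+ 2.

Definition Pcoef : R := \prod_(1 <= k < n.+1) a k ^+ 2.

Definition Sigma_mx (V : R) (d : nat) : 'M[R]_n :=
  \matrix_(i, j) (V * (d%:R) ^+ 2 * (kappa d) ^+ 2 / (a i.+1 * a j.+1)).

Definition lambda2 (V : R) (d : nat) : R :=
  V * (d%:R) ^+ 2 * (kappa d) ^+ 2 * \sum_(1 <= i < n.+1) (a i) ^-2.

Definition D_mx (V : R) (d : nat) : 'M[R]_n :=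
  \matrix_(i, j) (if (i == j :> nat) && (i.+1 == n) then lambda2 V d else 0).

Definition e_ (i r : nat) : R := if r == i then 1 else 0.

Definition S_col (k r : nat) : R :=
  if (k < n)%N then (a 1 / a k.+1) * e_ 1 r - e_ k.+1 r
  else (if r == n then 1 else a n / a r).

Definition S_mx : 'M[R]_n := \matrix_(i, j) S_col j.+1 i.+1.

Definition Sinv_entry (i j : nat) : R :=
  if i == n then Pcoef / (a j * a n * bcoef)
  else if j == i.+1 then
    - ((\sum_(1 <= k < n.+1 | k != i.+1)
          a i.+1 ^+ 2 * \prod_(1 <= l < n.+1 | (l != k) && (l != i.+1)) a l ^+ 2)
       / bcoef)
  else Pcoef / (a i.+1 * a j * bcoef).

Definition Sinv_mx : 'M[R]_n := \matrix_(i, j) Sinv_entry i.+1 j.+1.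

End Defs.

(* Main.v *)
Require Import Defs.
From HB Require Import structures.
From mathcomp Require Import all_boot all_order all_algebra.
From mathcomp Require Import all_classical all_reals.
From mathcomp Require Import trigo.
From mathcomp Require Import ring lra zify.
From Stdlib Require Import Lia.
Import Order.TTheory GRing.Theory Num.Theory.
Local Open Scope ring_scope.

Section Aux.
Variable R : realType.

Lemma bigD1p (r : seq nat) (j : nat) (p : pred nat) (F : nat -> R) :
  j \in r -> uniq r ->
  \prod_(i <- r | p i) F i = (if p j then F j else 1) * \prod_(i <- r | p i && (i != j)) F i.
Proof.
move=> jr ur; rewrite big_mkcond (bigD1_seq j) //=.
by rewrite big_mkcondl.
Qed.

Lemma sum_dl n (c : nat) (x : R) (F : nat -> R) :
  \sum_(k < n) (if (k : nat) == c then x else 0) * F k = if (c < n)%N then x * F c else 0.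
Proof.
rewrite (eq_bigr (fun k : 'I_n => if (k : nat) == c then x * F c else 0)).
  by rewrite -big_mkcond; exact: (big_ord1_eq _ (fun _ => x * F c)).
by move=> k _; case: eqP => [->|] //; rewrite mul0r.
Qed.

Lemma sum_dr n (c : nat) (x : R) (F : nat -> R) :
  \sum_(k < n) F k * (if (k : nat) == c then x else 0) = if (c < n)%N then F c * x else 0.
Proof.
rewrite (eq_bigr (fun k : 'I_n => if (k : nat) == c then F c * x else 0)).
  by rewrite -big_mkcond; exact: (big_ord1_eq _ (fun _ => F c * x)).
by move=> k _; case: eqP => [->|] //; rewrite mulr0.
Qed.

Variables (n : nat) (a : nat -> R).
Hypothesis hn : (2 <= n)%N.
Hypothesis ha : forall k, (1 <= k <= n)%N -> 0 < a k.

Lemma an0 {k} : (1 <= k <= n)%N -> a k != 0.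
Proof. by move=> h; rewrite gt_eqF // ha. Qed.

Lemma an0o (k : 'I_n) : a k.+1 != 0.
Proof. by apply: an0; rewrite /= ltn_ord. Qed.

Lemma sumnat (F : nat -> R) : \sum_(1 <= i < n.+1) F i = \sum_(k < n) F k.+1.
Proof. by rewrite big_add1 /= big_mkord. Qed.

Lemma inr k : (1 <= k <= n)%N -> k \in index_iota 1 n.+1.
Proof. by rewrite mem_index_iota ltnS. Qed.

Lemma ur : uniq (index_iota 1 n.+1).
Proof. by rewrite /index_iota iota_uniq. Qed.

Lemma Pne0 : Pcoef n a != 0.
Proof.
rewrite /Pcoef; rewrite big_nat_cond prodf_seq_neq0.
apply/allP => k _; apply/implyP => /andP [h1 h2].
by rewrite expf_neq0 // an0 // h1 -ltnS.
Qed.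

Lemma prodD1 k : (1 <= k <= n)%N ->
  \prod_(1 <= l < n.+1 | l != k) a l ^+ 2 = Pcoef n a / a k ^+ 2.
Proof.
move=> hk; rewrite /Pcoef (bigD1_seq k) ?inr ?ur //=.
have := an0 hk; move=> h. field. by rewrite h.
Qed.

Lemma prodD2 k m : (1 <= k <= n)%N -> (1 <= m <= n)%N -> k != m ->
  a m ^+ 2 * \prod_(1 <= l < n.+1 | (l != k) && (l != m)) a l ^+ 2 = Pcoef n a / a k ^+ 2.
Proof.
move=> hk hm hkm; rewrite -prodD1 //.
rewrite [RHS](@bigD1p _ m (fun l => l != k)) ?inr ?ur //=.
by rewrite eq_sym hkm.
Qed.

Definition ss := \sum_(k < n) (a k.+1 ^+ 2)^-1.

Lemma ss_gt0 : 0 < ss.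
Proof.
rewrite /ss; case: n hn ha => [//|n'] _ ha'.
rewrite big_ord_recl /=.
apply: ltr_wpDr.
  by apply: sumr_ge0 => i _; rewrite invr_ge0 exprn_ge0 // ltW // ha' //= ltnS ltn_ord.
by rewrite invr_gt0 exprn_gt0 // ha'.
Qed.

Lemma ss_ne0 : ss != 0.
Proof. by rewrite gt_eqF // ss_gt0. Qed.

Lemma bcoefE : bcoef n a = Pcoef n a * ss.
Proof.
rewrite /bcoef (eq_big_nat _ _ (F2 := fun k => Pcoef n a / a k ^+ 2)).
  by rewrite sumnat /ss mulr_sumr.
by move=> i hi; rewrite prodD1 // -ltnS.
Qed.

Definition alpha (i : nat) : R := (a (if i.+1 == n then n else i.+2) * ss)^-1.

Lemma SE (i j : 'I_n) : S_mx n a i j =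
  if (j.+1 < n)%N then (if (i : nat) == 0%N then a 1 / a j.+2 else 0) - (if (i : nat) == j.+1 then 1 else 0)
  else a n / a i.+1.
Proof.
rewrite mxE /S_col /e_; case: ifP => _.
  rewrite !eqSS; case: eqP => _; case: eqP => _; by rewrite ?mulr1 ?mulr0.
case: eqP => // ->; rewrite divff // an0 //; lia.
Qed.

Lemma SinvE (i j : 'I_n) : Sinv_mx n a i j =
  alpha i * (a j.+1)^-1 - (if (j : nat) == i.+1 then 1 else 0).
Proof.
have hP := Pne0; have hs := ss_ne0.
have hj := an0o j.
rewrite mxE /Sinv_entry /alpha bcoefE.
case: eqP => [hin|hin].
  have hjn : j != i.+1 :> nat by apply/eqP; move: (ltn_ord j); lia.
  rewrite (negbTE hjn) subr0.
  have := an0 (k := n); move=> h; field; rewrite h ?hP ?hs ?hj //; lia.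
have hi2 : a i.+2 != 0 by apply: an0; move: (ltn_ord i) hin; lia.
rewrite eqSS; case: eqP => [hji|hji]; last by rewrite subr0; field; rewrite hP hs hi2 hj.
rewrite big_nat_cond.
rewrite (eq_bigr (fun k => Pcoef n a / a k ^+ 2)); last first.
  move=> k /andP [/andP [h1 h2] hk]; rewrite prodD2 //; try lia.
  by move: (ltn_ord i) hin; lia.
rewrite -big_nat_cond.
have hi2in : (1 <= i.+2 <= n)%N by move: (ltn_ord i) hin; lia.
have e := @bigD1_seq R +%R 0 nat _ (i.+2) (fun k => Pcoef n a / a k ^+ 2) (inr _ hi2in) ur.
rewrite (_ : \sum_(1 <= k < n.+1 | k != i.+2) Pcoef n a / a k ^+ 2 =
   Pcoef n a * ss - Pcoef n a / a i.+2 ^+ 2); last first.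
  rewrite -bcoefE /bcoef (eq_big_nat _ _ (F2 := fun k => Pcoef n a / a k ^+ 2)).
    rewrite e.
    by rewrite addrC addKr.
  by move=> k hk; rewrite prodD1 // -ltnS.
rewrite hji; field; by rewrite hP hs hi2.
Qed.

Lemma SinvS : Sinv_mx n a *m S_mx n a = 1%:M.
Proof.
apply/matrixP => i j; rewrite !mxE.
rewrite (eq_bigr (fun k : 'I_n => (alpha i * (a k.+1)^-1 - (if (k : nat) == i.+1 then 1 else 0)) *
   (if (j.+1 < n)%N then (if (k : nat) == 0%N then a 1 / a j.+2 else 0) - (if (k : nat) == j.+1 then 1 else 0)
  else a n / a k.+1))); last by move=> k _; rewrite SinvE SE.
rewrite (eq_bigr (fun k : 'I_n => alpha i * (a k.+1)^-1 *
   (if (j.+1 < n)%N then (if (k : nat) == 0%N then a 1 / a j.+2 else 0) - (if (k : nat) == j.+1 then 1 else 0)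
  else a n / a k.+1) - (if (k : nat) == i.+1 then 1 else 0) * 
   (if (j.+1 < n)%N then (if (k : nat) == 0%N then a 1 / a j.+2 else 0) - (if (k : nat) == j.+1 then 1 else 0)
  else a n / a k.+1))); last by move=> k _; rewrite mulrBl.
rewrite sumrB (sum_dl _ _ _ (fun k : nat => if (j.+1 < n)%N then (if k == 0%N then a 1 / a j.+2 else 0) - (if k == j.+1 then 1 else 0)
  else a n / a k.+1)) mul1r.
case hj : (j.+1 < n)%N.
  rewrite (eq_bigr (fun k : 'I_n => alpha i * (a k.+1)^-1 * (if (k : nat) == 0%N then a 1 / a j.+2 else 0)
     - alpha i * (a k.+1)^-1 * (if (k : nat) == j.+1 then 1 else 0))); last by move=> k _; rewrite mulrBr.
  rewrite sumrB !(sum_dr _ _ _ (fun k : nat => alpha i * (a k.+1)^-1)) hj.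
  have -> : (0 < n)%N by lia.
  have h2 : a j.+2 != 0 by apply: an0; lia.
  have h1 : a 1 != 0 by apply: an0; lia.
  rewrite eqSS.
  rewrite (_ : alpha i * (a 1)^-1 * (a 1 / a j.+2) - alpha i * (a j.+2)^-1 * 1 = 0); last by field; rewrite ?h1 ?h2.
  rewrite (_ : (i.+1 == 0%N) = false) //.
  case: (eqVneq i j) => [ij|ij].
    by subst j; rewrite hj eqxx /= !sub0r opprK.
  have ij2 : ((i : nat) == j) = false by apply/negbTE.
  by rewrite /= ij2; case: ifP => _; rewrite ?subrr ?sub0r ?oppr0.
have jn : j.+1 = n by move: (ltn_ord j) hj; lia.
rewrite (eq_bigr (fun k : 'I_n => (alpha i * a n) * (a k.+1 ^+ 2)^-1)); last first.
  move=> k _; have := an0o k; move=> h; field; by rewrite h.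
rewrite -mulr_sumr -/ss /alpha.
have hs := ss_ne0.
case: eqP => [hin|hin].
  have -> : i = j by apply: val_inj => /=; lia.
  have hn0 : a n != 0 by apply: an0; lia.
  rewrite hj eqxx subr0 mulr1n; field; by rewrite hn0 hs.
have -> : (i.+1 < n)%N by move: (ltn_ord i) hin; lia.
have -> : (i == j) = false by apply/eqP => e; apply: hin; rewrite e jn.
have hi2 : a i.+2 != 0 by apply: an0; move: (ltn_ord i) hin; lia.
rewrite mulr0n; field; by rewrite hi2 hs.
Qed.

Lemma SigmaS V d : Sigma_mx n a V d *m S_mx n a = S_mx n a *m D_mx n a V d.
Proof.
apply/matrixP => i j; rewrite !mxE.
set c := V * (d%:R) ^+ 2 * (kappa d) ^+ 2.
rewrite [RHS](bigD1 j) //= [X in _ + X]big1 ?addr0; last first.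
  move=> k hk; rewrite [D_mx _ _ _ _ k j]mxE; case: (@eqP nat k j) => [e|_]; last by rewrite mulr0.
  by move: hk; rewrite (val_inj e) eqxx.
rewrite [D_mx _ _ _ _ j j]mxE eqxx /=.
rewrite (eq_bigr (fun k : 'I_n => c / a i.+1 * (a k.+1)^-1 * S_mx n a k j)); last first.
  by move=> k _; rewrite mxE invfM mulrA.
rewrite (eq_bigr (fun k : 'I_n => c / a i.+1 * (a k.+1)^-1 *
   (if (j.+1 < n)%N then (if (k : nat) == 0%N then a 1 / a j.+2 else 0) - (if (k : nat) == j.+1 then 1 else 0)
  else a n / a k.+1))); last by move=> k _; rewrite SE.
case hj : (j.+1 < n)%N.
  have -> : (j.+1 == n) = false by apply/eqP; lia.
  rewrite mulr0.
  rewrite (eq_bigr (fun k : 'I_n => c / a i.+1 * (a k.+1)^-1 * (if (k : nat) == 0%N then a 1 / a j.+2 else 0)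
     - c / a i.+1 * (a k.+1)^-1 * (if (k : nat) == j.+1 then 1 else 0))); last by move=> k _; rewrite mulrBr.
  rewrite sumrB !(sum_dr _ _ _ (fun k : nat => c / a i.+1 * (a k.+1)^-1)) hj.
  have -> : (0 < n)%N by lia.
  have h2 : a j.+2 != 0 by apply: an0; lia.
  have h1 : a 1 != 0 by apply: an0; lia.
  have h3 := an0o i; field; by rewrite ?h1 ?h2 ?h3.
have jn : j.+1 = n by move: (ltn_ord j) hj; lia.
rewrite jn eqxx SE hj.
rewrite (eq_bigr (fun k : 'I_n => (c / a i.+1 * a n) * (a k.+1 ^+ 2)^-1)); last first.
  move=> k _; have := an0o k; move=> h; field; by rewrite ?h ?(an0o i).
rewrite -mulr_sumr -/ss /lambda2 sumnat -/c.
rewrite (eq_bigr (fun k : 'I_n => (a k.+1 ^+ 2)^-1)) // -/ss.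
have := an0o i; move=> h; field; by rewrite h.
Qed.

End Aux.

Theorem corollary5p4 (R : realType) (d n : nat) (V : R) (tau : nat -> R)
  (hd : (1 <= d)%N) (hn : (2 <= n)%N) (hV : 0 < V)
  (htau1 : - (d%:R / 2) < tau 1%N)
  (htau : forall i j : nat, (1 <= i)%N -> (i < j)%N -> (j <= n)%N -> tau i < tau j) :
  let a := fun i : nat => tau i + d%:R in
  S_mx n a \in unitmx /\
  D_mx n a V d = invmx (S_mx n a) *m Sigma_mx n a V d *m S_mx n a /\
  invmx (S_mx n a) = Sinv_mx n a.
Proof.
move=> a.
have ha : forall k, (1 <= k <= n)%N -> 0 < a k.
  move=> k /andP [h1 h2].
  have hd0 : (0 : R) < d%:R by rewrite ltr0n.
  have ht : tau 1%N <= tau k.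
    case: (ltngtP 1 k) h1 => // [hk _|<- _]; last by [].
    by apply/ltW/htau.
  rewrite /a; lra.
have H := @SinvS R n a hn ha.
have [_ hu] := mulmx1_unit H.
have hinv : invmx (S_mx n a) = Sinv_mx n a.
  by rewrite -[invmx _]mulmx1 -(mulmx1C H) mulmxA mulVmx // mul1mx.
split=> //; split=> //.
by rewrite -mulmxA (@SigmaS R n a hn ha V d) mulKmx.
Qed.
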